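(* (a) An integer $k\ge1$ is a local minimum of the sequence $(p(m))_{m\ge0}$ if and only if $k$ is a positive multiple of $4$. (b) Let $a_j=p(4j)$ for $j\ge0$ be the sequence of negligibility values at the multiples of $4$. An integer $j\ge1$ is a local minimum of $(a_j)_{j\ge0}$ if and only if $j$ is a positive multiple of $4$; that is, the minima among the negligibility minima occur exactly at the integers $16l$, $l\ge1$.
   Context: Every integer $m\ge 0$ is written in binary as $m=\sum_{k\ge1} m_k 2^{k-1}$ with $m_k\in\{0,1\}$. The negligibility is $p(m)=\sum_k (k+1)m_k$. For a real sequence $(a_m)_{m\ge0}$, an index $k\ge1$ is a local minimum if $a_{k-1}>a_k<a_{k+1}$. *)

(* Defs.v *)
From mathcomp Require Import all_boot.
Set Implicit Arguments. Unset Strict Implicit. Unset Printing Implicit Defensive.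

(* Binary digit m_k (k >= 1) of m: m = \sum_k m_k 2^(k-1). *)
Definition digit (m k : nat) : nat := odd (m %/ 2 ^ k.-1).

(* Negligibility p(m) = \sum_{k>=1} (k+1) m_k.  Digits m_k vanish for
   k > m (since 2^(k-1) >= k > m), so the sum over 1 <= k <= m is the full sum. *)
Definition negl (m : nat) : nat := \sum_(1 <= k < m.+1) k.+1 * digit m k.

Definition local_min (a : nat -> nat) (k : nat) : Prop :=
  1 <= k /\ a k.-1 > a k /\ a k < a k.+1.

(* Main.v *)
Require Import Defs.
From mathcomp Require Import all_boot.
From mathcomp Require Import zify.

Lemma digit_big m k : m < k -> digit m k = 0.
Proof.
move=> H; rewrite /digit divn_small //.
case: k H => // k H /=.
by apply: leq_trans (ltn_expl k (isT : 1 < 2)).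
Qed.

Lemma sumw (w : nat -> nat) m N : m <= N ->
  \sum_(1 <= k < m.+1) w k * digit m k = \sum_(1 <= k < N.+1) w k * digit m k.
Proof.
move=> H; rewrite (@big_cat_nat _ _ _ m.+1 1 N.+1) //=.
rewrite [\sum_(m.+1 <= i < N.+1) _](_ : _ = 0) ?addn0 //.
rewrite big_nat_cond big1 // => i /andP[/andP[Hi _] _].
by rewrite digit_big ?muln0.
Qed.

Lemma digit_shift u (b : bool) k : 1 <= k -> digit (2 * u + b) k.+1 = digit u k.
Proof.
move=> Hk; rewrite /digit /=.
case: k Hk => // k _ /=.
rewrite expnS divnMA mulnC divnMDl //.
by rewrite (@divn_small b 2) ?addn0 //; case: b.
Qed.

Lemma digit1 m : digit m 1 = odd m.
Proof. by rewrite /digit expn0 divn1. Qed.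

Lemma shift (w : nat -> nat) u (b : bool) N :
  \sum_(1 <= k < N.+2) w k * digit (2 * u + b) k =
  w 1 * b + \sum_(1 <= k < N.+1) w k.+1 * digit u k.
Proof.
rewrite big_ltn // digit1 oddD oddM /=.
congr (_ + _); first by case: b.
rewrite big_add1 /= big_nat_cond [RHS]big_nat_cond.
apply: eq_bigr => i /andP[/andP[Hi _] _].
by rewrite digit_shift.
Qed.

Definition pop m := \sum_(1 <= k < m.+1) digit m k.
Definition h c m := negl m + c * pop m.

Lemma popE m : pop m = \sum_(1 <= k < m.+1) (fun=> 1) k * digit m k.
Proof. by rewrite /pop; apply: eq_bigr => i _; rewrite mul1n. Qed.

Lemma neglS u (b : bool) : negl (2 * u + b) = negl u + pop u + 2 * b.
Proof.
rewrite /negl (@sumw _ _ (2 * u + b).+1) // shift.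
rewrite (@sumw _ u (2 * u + b)); last by lia.
rewrite popE (@sumw _ u (2 * u + b)); last by lia.
rewrite addnC; congr (_ + _).
rewrite -big_split /=; apply: eq_bigr => i _; rewrite -mulnDl; congr (_ * _); lia.
Qed.

Lemma popS u (b : bool) : pop (2 * u + b) = pop u + b.
Proof.
rewrite !popE (@sumw _ _ (2 * u + b).+1) // shift.
rewrite (@sumw _ u (2 * u + b)); last by lia.
by rewrite addnC mul1n.
Qed.

Lemma hE0 c u : h c (2 * u) = h c.+1 u.
Proof.
have := neglS u false; have := popS u false; rewrite /h /= !addn0 => -> ->.
lia.
Qed.

Lemma hE1 c u : h c (2 * u).+1 = h c.+1 u + c + 2.
Proof.
have := neglS u true; have := popS u true; rewrite /h /= !addn1 => -> ->.
lia.
Qed.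

Lemma Lb r : forall c, 1 <= r -> h c r <= h c r.-1 + c + 2.
Proof.
elim/ltn_ind: r => r IH c Hr.
have E := odd_double_half r.
case Ho: (odd r) E => /= E.
- have -> : r = (2 * r./2).+1 by lia.
  by rewrite hE1 /= hE0.
- have -> : r = 2 * r./2 by lia.
  have Hu : 1 <= r./2 by lia.
  have := IH r./2 ltac:(lia) c.+1 Hu.
  have -> : (2 * r./2).-1 = (2 * (r./2).-1).+1 by lia.
  rewrite hE0 hE1; lia.
Qed.

Lemma LM c k : 1 <= k -> (h c k < h c k.-1 /\ h c k < h c k.+1) <-> 4 %| k.
Proof.
move=> Hk.
have E := divn_eq k 4.
set q := k %/ 4 in E *; set t := k %% 4 in E *.
have Ht : t < 4 by rewrite /t ltn_mod.
have Hd : (4 %| k) = (t == 0) by rewrite /t /dvdn.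
rewrite Hd.
case: t Ht E Hd => [|[|[|[|t]]]] // _ E _.
- have Hq : 1 <= q by lia.
  have := @Lb q c.+2 Hq.
  have -> : k = 2 * (2 * q) by lia.
  have -> : (2 * (2 * q)).-1 = (2 * (2 * q.-1).+1).+1 by lia.
  rewrite !hE0 !hE1 hE0; lia.
- have -> : k = (2 * (2 * q)).+1 by lia.
  rewrite /= hE1 !hE0; split => [[H1 H2]|//]; lia.
- have -> : k = 2 * (2 * q).+1 by lia.
  have -> : (2 * (2 * q).+1).-1 = (2 * (2 * q)).+1 by lia.
  rewrite !hE0 !hE1 !hE0; split => [[H1 H2]|//]; lia.
- have -> : k = (2 * (2 * q).+1).+1 by lia.
  rewrite /= hE1 !hE0 hE1; split => [[H1 H2]|//]; lia.
Qed.

Theorem theorem3 :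
  (forall k : nat, 1 <= k -> (local_min negl k <-> 4 %| k)) /\
  (forall j : nat, 1 <= j ->
     (local_min (fun i => negl (4 * i)) j <-> 4 %| j)).
Proof.
split => k Hk.
- rewrite -(@LM 0 k Hk) /local_min /h !mul0n !addn0.
  split => [[_ [H1 H2]]|[H1 H2]] //.
- have N : forall i, negl (4 * i) = h 2 i.
    move=> i; rewrite -(hE0 1) -(hE0 0) mulnA /h mul0n addn0.
    done.
  rewrite -(@LM 2 k Hk) /local_min !N.
  split => [[_ [H1 H2]]|[H1 H2]] //.
Qed.
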